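(* Let $\mathcal B$ be a finite set of finite algebras of signature $F$ and assume that $\mathcal B$ has a majority term. The algebras in $\mathcal B$ share a common ternary discriminator term if and only if, for all $\mathbf A_1,\mathbf A_2\in\mathcal B$, the algebras $\mathbf A_1$ and $\mathbf A_2$ share a common ternary discriminator term.
   Context: The ternary discriminator on a set $A$ is $\tau(x,y,z)=x$ if $x\ne y$, $=z$ if $x=y$. A family of algebras shares a common ternary discriminator term if there is a ternary term $t$ with $t^{\mathbf A}$ equal to the ternary discriminator on $A$ for each member $\mathbf A$. $\mathcal B$ has a majority term if some ternary term $m$ satisfies $m(x,x,y)=m(x,y,x)=m(y,x,x)=x$ in every algebra of $\mathcal B$. *)

(* Defs.v *)
From mathcomp Require Import all_boot.
Set Implicit Arguments. Unset Strict Implicit. Unset Printing Implicit Defensive.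

Record signature := Signature { op_sym : Type; arity : op_sym -> nat }.

Inductive term (F : signature) (V : Type) : Type :=
  | Var : V -> term F V
  | App : forall f : op_sym F, ('I_(arity f) -> term F V) -> term F V.

Record algebra (F : signature) := Algebra {
  carrier :> finType;
  interp : forall f : op_sym F, ('I_(arity f) -> carrier) -> carrier }.

Fixpoint eval (F : signature) (V : Type) (A : algebra F) (v : V -> A)
  (t : term F V) : A :=
  match t with
  | Var x => v x
  | App f args => @interp F A f (fun i => @eval F V A v (args i))
  end.

Definition term3 (F : signature) := term F 'I_3.

Definition val3 (T : Type) (x y z : T) : 'I_3 -> T :=
  fun k => if val k == 0 then x else if val k == 1 then y else z.

Definition term_op3 (F : signature) (A : algebra F) (t : term3 F) (x y z : A) : A :=
  @eval F _ A (val3 x y z) t.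

Definition discriminator (T : eqType) (x y z : T) : T :=
  if x != y then x else z.

Definition is_discriminator_term (F : signature) (t : term3 F) (A : algebra F) :=
  forall x y z : A, @term_op3 F A t x y z = discriminator x y z.

Definition is_majority_term (F : signature) (m : term3 F) (A : algebra F) :=
  forall x y : A, [/\ @term_op3 F A m x x y = x, @term_op3 F A m x y x = x
                    & @term_op3 F A m y x x = x].

(* Main.v *)
Require Import Defs.
From mathcomp Require Import all_boot.
From Stdlib Require Import FunctionalExtensionality.

Fixpoint subst (F : signature) (V W : Type) (s : V -> term F W) (t : term F V) : term F W :=
  match t with
  | Var x => s x
  | App f args => @App F W f (fun i => subst F V W s (args i))
  end.
Arguments subst {F V W}.

Lemma eval_subst (F : signature) (V W : Type) (A : algebra F) (v : W -> A)
  (s : V -> term F W) (t : term F V) :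
  eval v (subst s t) = eval (fun x => eval v (s x)) t.
Proof.
elim: t => [x|f args IH] //=.
by congr (interp _); apply: functional_extensionality_dep => i; rewrite IH.
Qed.

Lemma eval_ext (F : signature) (V : Type) (A : algebra F) (v w : V -> A)
  (t : term F V) : (forall x, v x = w x) -> eval v t = eval w t.
Proof.
move=> H; elim: t => [x|f args IH] //=.
by congr (interp _); apply: functional_extensionality_dep => i; rewrite IH.
Qed.

Lemma op3_subst (F : signature) (A : algebra F) (m t1 t2 t3 : term3 F) (x y z : A) :
  term_op3 (subst (val3 t1 t2 t3) m) x y z =
  term_op3 m (term_op3 t1 x y z) (term_op3 t2 x y z) (term_op3 t3 x y z).
Proof.
rewrite /term_op3 eval_subst; apply: eval_ext => k.
by rewrite /val3; case: ifP => _ //; case: ifP.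
Qed.

Section Main.
Variables (F : signature) (I : finType) (B : I -> algebra F) (m : term3 F).
Hypothesis Hm : forall i : I, is_majority_term m (B i).
Hypothesis Hp : forall i j : I, exists t : term3 F,
        is_discriminator_term t (B i) /\ is_discriminator_term t (B j).

Lemma main n : forall S : {set I}, #|S| <= n ->
  exists t : term3 F, forall i, i \in S -> is_discriminator_term t (B i).
Proof.
elim: n => [|n IH] S HS.
  exists (@Var F _ ord0) => i iS.
  by move: HS; rewrite leqn0 => /eqP/cards0_eq S0; rewrite S0 inE in iS.
case: (boolP [exists a in S, exists b in S, exists c in S,
               [&& a != b, a != c & b != c]]).
  case/exists_inP => a aS /exists_inP [b bS /exists_inP [c cS /and3P [ab ac bc]]].
  have sub x : x \in S -> #|S :\ x| <= n.
    by move=> xS; move: HS; rewrite (cardsD1 x S) xS.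
  have [t1 H1] := IH _ (sub a aS).
  have [t2 H2] := IH _ (sub b bS).
  have [t3 H3] := IH _ (sub c cS).
  exists (subst (val3 t1 t2 t3) m) => i iS x y z.
  rewrite op3_subst.
  have [ia | ia] := eqVneq i a.
    have ib : i != b by rewrite ia.
    have ic : i != c by rewrite ia.
    have h2 := H2 i; have h3 := H3 i.
    rewrite !inE ib ic iS /= in h2 h3.
    by rewrite h2 ?h3 //; case: (Hm i (discriminator x y z) (term_op3 t1 x y z)).
  have [ib | ib] := eqVneq i b.
    have ic : i != c by rewrite ib.
    have h1 := H1 i; have h3 := H3 i.
    rewrite !inE ia ic iS /= in h1 h3.
    by rewrite h1 ?h3 //; case: (Hm i (discriminator x y z) (term_op3 t2 x y z)).
  have h1 := H1 i; have h2 := H2 i.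
  rewrite !inE ia ib iS /= in h1 h2.
  by rewrite h1 ?h2 //; case: (Hm i (discriminator x y z) (term_op3 t3 x y z)).
move=> Hno.
case: (pickP (mem S)) => [a aS|S0]; last first.
  by exists (@Var F _ ord0) => i iS; move: (S0 i); rewrite /= iS.
case: (pickP (mem (S :\ a))) => [b bS|Sa].
  have [t [Ha Hb]] := Hp a b.
  exists t => i iS.
  move: bS; rewrite !inE => /andP [ba bS].
  have [-> //|ia] := eqVneq i a.
  have [-> //|ib] := eqVneq i b.
  exfalso; move/negP: Hno; apply; apply/exists_inP; exists a => //.
  apply/exists_inP; exists b => //; apply/exists_inP; exists i => //.
  by rewrite eq_sym ba eq_sym ia eq_sym ib.
have [t [Ha _]] := Hp a a.
exists t => i iS.
have [-> //|ia] := eqVneq i a.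
by move: (Sa i); rewrite !inE ia iS.
Qed.

End Main.

Theorem corollary3p3 (F : signature) (I : finType) (B : I -> algebra F) :
  (exists m : term3 F, forall i : I, is_majority_term m (B i)) ->
  ((exists t : term3 F, forall i : I, is_discriminator_term t (B i)) <->
   (forall i j : I, exists t : term3 F,
        is_discriminator_term t (B i) /\ is_discriminator_term t (B j))).
Proof.
case=> m Hm; split.
  by case=> t Ht i j; exists t.
move=> Hp.
have [t Ht] := @main F I B m Hm Hp _ _ (leqnn #|[set: I]|).
by exists t => i; apply: Ht; rewrite inE.
Qed.
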